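(* Let $I$ be a set, $\theta$ an infinite cardinal, $\mu$ a cardinal and $\varepsilon$ an ordinal with $\mu=\mu^{<\theta}>\varepsilon$ or $\theta>\varepsilon$. Let $D$ be a $\theta$-complete $(\mu,\theta)$-regular filter on $I$ (i.e. on the Boolean algebra $\mathscr P(I)$), let $T$ be an $\mathbb L_{\theta,\theta}(\tau)$-theory and $\Delta$ a set of conjunctions of fewer than $\theta$ atomic formulas of $\mathbb L_{\theta,\theta}(\tau)$. Then the following are equivalent: (B) $D$ is a $(\mu,\theta,\varepsilon!,\Delta,T)$-moral filter on $\mathscr P(I)$; (C) for every sequence $\langle M_s:s\in I\rangle$ of models of $T$, the reduced product $\prod_{s\in I}M_s/D$ is $(\mu^+,\theta,\varepsilon!,\Delta)$-saturated.
   Context: $D$ is $(\mu,\theta)$-regular if there are $w_s\in[\mu]^{<\theta}$ ($s\in I$) with $\{s\in I:\alpha\in w_s\}\in D$ for every $\alpha<\mu$. $\bar x_{[\varepsilon]}=\langle x_\zeta:\zeta<\varepsilon\rangle$; formulas of $\Delta$ are regarded as $\varphi(\bar x_{[\varepsilon]},\bar y)$ (dummy variables allowed). Moral filter: for a filter $D$ on a complete Boolean algebra $\mathfrak B$, a $D$-$(\mu,\theta,\varepsilon!,\Delta,T)$-problem is $\bar{\mathbf a}=\langle\mathbf a_u:u\in[\mu]^{<\theta}\rangle$ with $\mathbf a_u\in D$, $u\subseteq v\Rightarrow\mathbf a_v\le\mathbf a_u$, $\mathbf a_\emptyset=1$, such that for some sequence $\langle\varphi_\alpha(\bar x_{[\varepsilon]},\bar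 y_\alpha):\alpha<\mu\rangle$ of formulas from $\Delta$, for every nonzero $\mathbf a\in\mathfrak B$ and every $u\in[\mu]^{<\theta}$ there are $M\models T$ and tuples $\bar b_\alpha$ ($\alpha\in u$) in $M$ such that for every $v\subseteq u$: if $\mathbf a\le\mathbf a_v$ then $M\models\exists\bar x_{[\varepsilon]}\bigwedge_{\alpha\in v}\varphi_\alpha(\bar x_{[\varepsilon]},\bar b_\alpha)$, and if $\mathbf a\le 1-\mathbf a_v$ then $M\models\neg\exists\bar x_{[\varepsilon]}\bigwedge_{\alpha\in v}\varphi_\alpha(\bar x_{[\varepsilon]},\bar b_\alpha)$. A solution is $\bar{\mathbf b}=\langle\mathbf b_u:u\in[\mu]^{<\theta}\rangle$ with $\mathbf b_u\in D$, $\mathbf b_\emptyset=1$, $\mathbf b_u\le\mathbf a_u$, and $\mathbf b_u=\bigcap_{\alpha\in u}\mathbf b_{\{\alpha\}}$. $D$ is $(\mu,\theta,\varepsilon!,\Delta,T)$-moral if every such problem has a solution. A structure $N$ is $(\lambda,\theta,\varepsilon!,\Delta)$-saturated if every set $p$ of fewer than $\lambda$ formulas $\varphi(\bar x_{[\varepsilon]},\bar a)$ with $\varphi\in\Delta$, $\bar a$ from $N$, such that every subset of $p$ of size $<\theta$ is realized in $N$, is realized in $N$. *)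

(* Defs.v *)
From Stdlib Require Import IndefiniteDescription.

(** * Cardinal comparisons (cardinals are represented by types) *)
Definition le_card (A B : Type) : Prop :=
  exists f : A -> B, forall x y, f x = f y -> x = y.
Definition lt_card (A B : Type) : Prop := le_card A B /\ ~ le_card B A.

Definition small (Th : Type) {X : Type} (u : X -> Prop) : Prop :=
  lt_card {x : X | u x} Th.

Record vocab : Type := {
  fsym : Type; farity : fsym -> Type;
  rsym : Type; rarity : rsym -> Type }.

Inductive term (t : vocab) (X : Type) : Type :=
| tvar : X -> term t X
| tapp : forall f : fsym t, (farity t f -> term t X) -> term t X.

(** Formulas with free variables in [X]; [fex K phi] binds a block of
    variables indexed by [K] (the formula [phi] has variables [X + K]). *)
Inductive formula (t : vocab) : Type -> Type :=
| feq : forall X, term t X -> term t X -> formula t X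
| frel : forall X (r : rsym t), (rarity t r -> term t X) -> formula t X
| fneg : forall X, formula t X -> formula t X
| fand : forall X (K : Type), (K -> formula t X) -> formula t X
| fex : forall X (K : Type), formula t (X + K) -> formula t X.

Arguments tvar {t X} _.
Arguments tapp {t X} _ _.
Arguments feq {t X} _ _.
Arguments frel {t X} _ _.
Arguments fneg {t X} _.
Arguments fand {t X K} _.
Arguments fex {t X K} _.

Fixpoint term_in_L {t : vocab} (Th : Type) {X : Type} (u : term t X) : Prop :=
  match u with
  | tvar _ => True
  | tapp f args => lt_card (farity t f) Th /\ forall i, term_in_L Th (args i)
  end.

Fixpoint formula_in_L {t : vocab} (Th : Type) {X : Type} (phi : formula t X) : Prop :=
  match phi with
  | feq u1 u2 => term_in_L Th u1 /\ term_in_L Th u2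
  | @frel _ _ r args => lt_card (rarity t r) Th /\ forall i, term_in_L Th (args i)
  | fneg psi => formula_in_L Th psi
  | @fand _ _ K psis => lt_card K Th /\ forall k, formula_in_L Th (psis k)
  | @fex _ _ K psi => lt_card K Th /\ formula_in_L Th psi
  end.

Definition atomic {t : vocab} {X : Type} (phi : formula t X) : Prop :=
  match phi with
  | feq _ _ => True
  | frel _ _ => True
  | _ => False
  end.

Definition conj_atomic {t : vocab} (Th : Type) {X : Type} (phi : formula t X) : Prop :=
  atomic phi \/
  match phi with
  | @fand _ _ K psis => lt_card K Th /\ forall k, atomic (psis k)
  | _ => False
  end.

Record structure (t : vocab) : Type := {
  carrier :> Type;
  finterp : forall f : fsym t, (farity t f -> carrier) -> carrier;
  rinterp : forall r : rsym t, (rarity t r -> carrier) -> Prop }.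

Arguments carrier {t} _.
Arguments finterp {t} _ _ _.
Arguments rinterp {t} _ _ _.

Fixpoint eval {t : vocab} (M : structure t) {X : Type} (a : X -> M) (u : term t X) : M :=
  match u with
  | tvar x => a x
  | tapp f args => finterp M f (fun i => eval M a (args i))
  end.

Definition asg {M X K : Type} (a : X -> M) (b : K -> M) : X + K -> M :=
  fun z => match z with inl x => a x | inr k => b k end.

Fixpoint sat {t : vocab} (M : structure t) {X : Type} (phi : formula t X) : (X -> M) -> Prop :=
  match phi in formula _ X return (X -> M) -> Prop with
  | feq u1 u2 => fun a => eval M a u1 = eval M a u2
  | frel r args => fun a => rinterp M r (fun i => eval M a (args i))
  | fneg psi => fun a => ~ sat M psi a
  | fand psis => fun a => forall k, sat M (psis k) a
  | @fex _ _ K psi => fun a => exists b : K -> M, sat M psi (asg a b)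
  end.

Definition model {t : vocab} (T : formula t Empty_set -> Prop) (M : structure t) : Prop :=
  inhabited M /\ forall sigma, T sigma -> sat M sigma (fun e : Empty_set => match e with end).

(** Formulas phi(x_[eps], y): the x-variables are indexed by [E] (the ordinal
    eps), the y-variables by a type [Y] depending on the formula. *)
Definition dformula (t : vocab) (E : Type) : Type := {Y : Type & formula t (E + Y)}.

Definition dsat {t : vocab} (M : structure t) {E : Type} (phi : dformula t E)
  (c : E -> M) (b : projT1 phi -> M) : Prop :=
  sat M (projT2 phi) (asg c b).

Definition filter {I : Type} (D : (I -> Prop) -> Prop) : Prop :=
  D (fun _ => True) /\ ~ D (fun _ => False) /\
  (forall A B : I -> Prop, D A -> (forall s, A s -> B s) -> D B) /\
  (forall A B : I -> Prop, D A -> D B -> D (fun s => A s /\ B s)).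

Definition complete (Th : Type) {I : Type} (D : (I -> Prop) -> Prop) : Prop :=
  forall K : Type, lt_card K Th ->
  forall A : K -> I -> Prop, (forall k, D (A k)) -> D (fun s => forall k, A k s).

Definition regular (Mu Th : Type) {I : Type} (D : (I -> Prop) -> Prop) : Prop :=
  exists w : I -> Mu -> Prop,
    (forall s, small Th (w s)) /\ forall al : Mu, D (fun s => w s al).

(** a D-(mu,theta,eps!,Delta,T)-problem; index set [mu]^{<theta} is the set of
    small [u : Mu -> Prop] *)
Definition moral_problem {t : vocab} (Th Mu E : Type) (Delta : dformula t E -> Prop)
  (T : formula t Empty_set -> Prop) {I : Type} (D : (I -> Prop) -> Prop)
  (a : (Mu -> Prop) -> I -> Prop) : Prop :=
  (forall u, small Th u -> D (a u)) /\
  (forall u v : Mu -> Prop, small Th u -> small Th v -> (forall x, u x -> v x) ->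
     forall s, a v s -> a u s) /\
  (forall s, a (fun _ => False) s) /\
  exists phi : Mu -> dformula t E,
    (forall al, Delta (phi al)) /\
    forall A : I -> Prop, (exists s, A s) ->
    forall u : Mu -> Prop, small Th u ->
    exists (M : structure t) (b : forall al, projT1 (phi al) -> M),
      model T M /\
      forall v : Mu -> Prop, (forall x, v x -> u x) ->
        ((forall s, A s -> a v s) ->
           exists c : E -> M, forall al, v al -> dsat M (phi al) c (b al)) /\
        ((forall s, A s -> ~ a v s) ->
           ~ exists c : E -> M, forall al, v al -> dsat M (phi al) c (b al)).

Definition moral_solution (Th Mu : Type) {I : Type} (D : (I -> Prop) -> Prop)
  (a b : (Mu -> Prop) -> I -> Prop) : Prop :=
  (forall u, small Th u -> D (b u)) /\
  (forall s, b (fun _ => False) s) /\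
  (forall u, small Th u -> forall s, b u s -> a u s) /\
  (forall u, small Th u -> forall s, b u s <-> forall al, u al -> b (fun x => x = al) s).

Definition moral {t : vocab} (Th Mu E : Type) (Delta : dformula t E -> Prop)
  (T : formula t Empty_set -> Prop) {I : Type} (D : (I -> Prop) -> Prop) : Prop :=
  forall a, moral_problem Th Mu E Delta T D a -> exists b, moral_solution Th Mu D a b.

Definition rp_rel {I : Type} (D : (I -> Prop) -> Prop) (Ms : I -> Type)
  (f g : forall s, Ms s) : Prop := D (fun s => f s = g s).

Definition rp_carrier {I : Type} (D : (I -> Prop) -> Prop) (Ms : I -> Type) : Type :=
  {P : (forall s, Ms s) -> Prop | exists f, P = rp_rel D Ms f}.

Definition rp_class {I : Type} (D : (I -> Prop) -> Prop) (Ms : I -> Type)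
  (f : forall s, Ms s) : rp_carrier D Ms :=
  exist _ (rp_rel D Ms f) (ex_intro _ f eq_refl).

Definition rp_rep {I : Type} {D : (I -> Prop) -> Prop} {Ms : I -> Type}
  (c : rp_carrier D Ms) : forall s, Ms s :=
  proj1_sig (constructive_indefinite_description _ (proj2_sig c)).

Definition redprod {t : vocab} {I : Type} (D : (I -> Prop) -> Prop)
  (Ms : I -> structure t) : structure t :=
  {| carrier := rp_carrier D (fun s => carrier (Ms s));
     finterp := fun f args =>
       rp_class D (fun s => carrier (Ms s))
         (fun s => finterp (Ms s) f (fun i => rp_rep (args i) s));
     rinterp := fun r args =>
       D (fun s => rinterp (Ms s) r (fun i => rp_rep (args i) s)) |}.

(** * (mu^+, theta, eps!, Delta)-saturation: sets of fewer than mu^+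
    (i.e. at most mu) Delta-formulas with parameters, represented as families
    indexed by [K] with |K| <= mu. *)
Definition saturated_succ {t : vocab} (Mu Th : Type) {E : Type}
  (Delta : dformula t E -> Prop) (N : structure t) : Prop :=
  forall (K : Type) (phi : K -> dformula t E) (pars : forall k, projT1 (phi k) -> N),
    le_card K Mu -> (forall k, Delta (phi k)) ->
    (forall J : K -> Prop, small Th J ->
       exists c : E -> N, forall k, J k -> dsat N (phi k) c (pars k)) ->
    exists c : E -> N, forall k, dsat N (phi k) c (pars k).

(* Main.v *)
Require Import Defs.
From Stdlib Require Import Classical ClassicalEpsilon FunctionalExtensionality PropExtensionality ProofIrrelevance.

Lemma le_card_trans A B C : le_card A B -> le_card B C -> le_card A C.
Proof. intros [f Hf] [g Hg]. exists (fun x => g (f x)). intros x y H. apply Hf, Hg, H. Qed.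

Lemma le_lt_card A B C : le_card A B -> lt_card B C -> lt_card A C.
Proof. intros H [H1 H2]. split. eapply le_card_trans; eauto. intro H3. apply H2. eapply le_card_trans; eauto. Qed.

Lemma small_sub Th X (u v : X -> Prop) : (forall x, u x -> v x) -> small Th v -> small Th u.
Proof. intros Huv Hv. unfold small in *. eapply le_lt_card; [|exact Hv].
  exists (fun p : {x | u x} => exist _ (proj1_sig p) (Huv _ (proj2_sig p))).
  intros [x hx] [y hy] H. apply (f_equal (@proj1_sig _ _)) in H. simpl in H. subst.
  f_equal. apply proof_irrelevance. Qed.

Lemma small_empty Th X : le_card nat Th -> small Th (fun _ : X => False).
Proof. intros [f Hf]. split.
 - exists (fun p : {x : X | False} => match proj2_sig p with end). intros [x []].
 - intros [g Hg]. destruct (g (f 0)) as [x []]. Qed.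

Lemma small_single Th X (a : X) : le_card nat Th -> small Th (fun x => x = a).
Proof. intros [f Hf]. split.
 - exists (fun _ => f 0). intros [x hx] [y hy] _. subst. f_equal; apply proof_irrelevance.
 - intros [g Hg]. assert (H : f 0 = f 1).
   { apply Hg. generalize (g (f 0)), (g (f 1)). intros [x hx] [y hy]. subst.
     f_equal; apply proof_irrelevance. }
   apply Hf in H. discriminate. Qed.

Lemma image_small Th A B (h : A -> B) (u : A -> Prop) : small Th u -> small Th (fun k => exists al, u al /\ h al = k).
Proof.
  intro Hu. eapply le_lt_card; [|exact Hu].
  exists (fun p => let q := constructive_indefinite_description _ (proj2_sig p) in exist u (proj1_sig q) (proj1 (proj2_sig q))).
  intros [k hk] [k' hk'] E. cbv zeta in E. simpl in E.
  destruct (constructive_indefinite_description _ hk) as [al [Hal Hk]].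
  destruct (constructive_indefinite_description _ hk') as [al' [Hal' Hk']].
  simpl in E. apply (f_equal (@proj1_sig _ _)) in E. simpl in E. subst.
  f_equal. apply proof_irrelevance.
Qed.

Section F.
Lemma fmono {I} (D : (I -> Prop) -> Prop) : filter D -> forall A B : I -> Prop, D A -> (forall s, A s -> B s) -> D B.
Proof. intros (_ & _ & H & _). exact H. Qed.
Lemma fand2 {I} (D : (I -> Prop) -> Prop) : filter D -> forall A B : I -> Prop, D A -> D B -> D (fun s => A s /\ B s).
Proof. intros (_ & _ & _ & H). exact H. Qed.
Lemma ftrue {I} (D : (I -> Prop) -> Prop) : filter D -> forall A : I -> Prop, (forall s, A s) -> D A.
Proof. intros HF A H. apply (fmono D HF (fun _ => True)); auto. apply HF. Qed.
End F.

Definition rep {t I} {D : (I -> Prop) -> Prop} {Ms : I -> structure t} (x : carrier (redprod D Ms)) : forall s, carrier (Ms s) := @rp_rep I D (fun s => carrier (Ms s)) x.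

Lemma rep_spec {I} (D : (I->Prop)->Prop) (Ms : I -> Type) (c : rp_carrier D Ms) : proj1_sig c = rp_rel D Ms (rp_rep c).
Proof. unfold rp_rep. destruct (IndefiniteDescription.constructive_indefinite_description _ (proj2_sig c)) as [g Hg]. exact Hg. Qed.

Lemma rep_class {I} (D : (I->Prop)->Prop) (Ms : I -> Type) f : filter D ->
  D (fun s => rp_rep (rp_class D Ms f) s = f s).
Proof. intro HF. pose proof (rep_spec D Ms (rp_class D Ms f)) as H. simpl in H.
  assert (H2 : rp_rel D Ms f f) by (unfold rp_rel; apply ftrue; auto).
  rewrite H in H2. unfold rp_rel in H2. exact H2. Qed.

Lemma class_eq {I} (D : (I->Prop)->Prop) (Ms : I -> Type) (x y : rp_carrier D Ms) : filter D ->
  D (fun s => rp_rep x s = rp_rep y s) -> x = y.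
Proof. intros HF H. assert (E : proj1_sig x = proj1_sig y).
  { rewrite (rep_spec D Ms x), (rep_spec D Ms y). apply functional_extensionality. intro h.
    apply propositional_extensionality. unfold rp_rel. split; intro H1.
    - eapply fmono; [auto| apply (fand2 D HF _ _ H H1)|]. simpl. intros s [e1 e2]. congruence.
    - eapply fmono; [auto| apply (fand2 D HF _ _ H H1)|]. simpl. intros s [e1 e2]. congruence. }
  destruct x as [P hP], y as [Q hQ]. simpl in E. subst. f_equal; apply proof_irrelevance. Qed.

Lemma fcomp {I Th} (D : (I -> Prop) -> Prop) : complete Th D -> forall K, lt_card K Th ->
  forall A : K -> I -> Prop, (forall k, D (A k)) -> D (fun s => forall k, A k s).
Proof. intros HC. exact HC. Qed.

Lemma eval_rp {t I Th} (D : (I -> Prop) -> Prop) (Ms : I -> structure t) :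
  filter D -> complete Th D -> forall X (u : term t X) (a : X -> redprod D Ms) (g : forall s, X -> Ms s),
  term_in_L Th u ->
  (forall x, D (fun s => rep (a x) s = g s x)) ->
  D (fun s => rep (eval (redprod D Ms) a u) s = eval (Ms s) (g s) u).
Proof.
  intros HF HC X u. induction u as [x|f args IH]; intros a g Hu Ha.
  - simpl. apply Ha.
  - simpl in Hu. destruct Hu as [Hf Hargs].
    assert (HZ := HC _ Hf _ (fun i => IH i a g (Hargs i) Ha)).
    assert (HR := rep_class D (fun s => carrier (Ms s))
       (fun s => finterp (Ms s) f (fun i => rp_rep (eval (redprod D Ms) a (args i)) s)) HF).
    apply (fmono D HF _ _ (fand2 D HF _ _ HZ HR)). intros s [Z R]. simpl.
    unfold rep in *. simpl. rewrite R. f_equal. apply functional_extensionality. intro i. apply Z.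
Qed.

Lemma los_atomic {t I Th} (D : (I -> Prop) -> Prop) (Ms : I -> structure t) :
  filter D -> complete Th D -> forall X (phi : formula t X) (a : X -> redprod D Ms) (g : forall s, X -> Ms s),
  atomic phi -> formula_in_L Th phi ->
  (forall x, D (fun s => rep (a x) s = g s x)) ->
  (sat (redprod D Ms) phi a <-> D (fun s => sat (Ms s) phi (g s))).
Proof.
  intros HF HC X phi. destruct phi; intros a g Hat HL Ha; simpl in *; try contradiction.
  - destruct HL as [H0 H1].
    assert (E0 := eval_rp D Ms HF HC _ t0 a g H0 Ha).
    assert (E1 := eval_rp D Ms HF HC _ t1 a g H1 Ha).
    split.
    + intro H. rewrite H in E0. apply (fmono D HF _ _ (fand2 D HF _ _ E0 E1)). intros s [e0 e1]. congruence.
    + intro H. apply class_eq; auto.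
      apply (fmono D HF _ _ (fand2 D HF _ _ H (fand2 D HF _ _ E0 E1))). intros s [e [e0 e1]].
      unfold rep in *. congruence.
  - destruct HL as [Hr Hargs].
    assert (HZ := HC _ Hr _ (fun i => eval_rp D Ms HF HC _ (t0 i) a g (Hargs i) Ha)).
    assert (EQ : D (fun s => (fun i => rp_rep (eval (redprod D Ms) a (t0 i)) s) = (fun i => eval (Ms s) (g s) (t0 i)))).
    { apply (fmono D HF _ _ HZ). intros s Z. apply functional_extensionality. apply Z. }
    split; intro H; apply (fmono D HF _ _ (fand2 D HF _ _ H EQ)); intros s [h e]; simpl in *.
    + rewrite <- e. exact h.
    + rewrite e. exact h.
Qed.

Lemma los_conj {t I Th} (D : (I -> Prop) -> Prop) (Ms : I -> structure t) :
  filter D -> complete Th D -> forall X (phi : formula t X) (a : X -> redprod D Ms) (g : forall s, X -> Ms s),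
  conj_atomic Th phi -> formula_in_L Th phi ->
  (forall x, D (fun s => rep (a x) s = g s x)) ->
  (sat (redprod D Ms) phi a <-> D (fun s => sat (Ms s) phi (g s))).
Proof.
  intros HF HC X phi a g [Hat|Hc] HL Ha.
  - apply (los_atomic D Ms HF HC); auto.
  - revert a g Hc HL Ha. destruct phi; intros a g Hc HL Ha; simpl in *; try contradiction.
    destruct Hc as [HK Hat]. destruct HL as [_ HL]. split.
    + intro H. apply (HC _ HK (fun k s => sat (Ms s) (f k) (g s))). intro k.
      apply (los_atomic D Ms HF HC _ _ a); auto.
    + intros H k. apply (los_atomic D Ms HF HC _ _ a g); auto.
      apply (fmono D HF _ _ H). auto.
Qed.

Lemma los_d {t I Th E} (D : (I -> Prop) -> Prop) (Ms : I -> structure t) :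
  filter D -> complete Th D -> forall (phi : dformula t E) (c : E -> redprod D Ms) (b : projT1 phi -> redprod D Ms)
  (cs : forall s, E -> Ms s) (bs : forall s, projT1 phi -> Ms s),
  formula_in_L Th (projT2 phi) -> conj_atomic Th (projT2 phi) ->
  (forall e, D (fun s => rep (c e) s = cs s e)) ->
  (forall y, D (fun s => rep (b y) s = bs s y)) ->
  (dsat (redprod D Ms) phi c b <-> D (fun s => dsat (Ms s) phi (cs s) (bs s))).
Proof.
  intros HF HC phi c b cs bs HL HA Hc Hb. unfold dsat.
  apply (los_conj D Ms HF HC _ _ _ (fun s => asg (cs s) (bs s))); auto.
  intros [e|y]; simpl; auto.
Qed.

Theorem claim3p6 (t : vocab) (I Th Mu E : Type) (D : (I -> Prop) -> Prop)
  (T : formula t Empty_set -> Prop) (Delta : dformula t E -> Prop) :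
  le_card nat Th ->
  ((forall K : Type, lt_card K Th -> le_card (K -> Mu) Mu) /\ lt_card E Mu
   \/ lt_card E Th) ->
  filter D -> complete Th D -> regular Mu Th D ->
  (forall sigma, T sigma -> formula_in_L Th sigma) ->
  (forall phi, Delta phi -> formula_in_L Th (projT2 phi) /\ conj_atomic Th (projT2 phi)) ->
  (moral Th Mu E Delta T D <->
   forall Ms : I -> structure t, (forall s, model T (Ms s)) ->
     saturated_succ Mu Th Delta (redprod D Ms)).
Proof.
  intros Hnat _ HF HC [w [Hw HwD]] _ HDelta. split.
  - intros Hmor Ms HMs K phi pars [gK Hg] HD Hfin.
    destruct (Hfin (fun _ => False) (small_empty _ _ Hnat)) as [c0 _].
    destruct (classic (inhabited K)) as [[k0]|HK].
    2: { exists c0. intro k. exfalso. apply HK. constructor. exact k. }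
    set (h := fun al : Mu => epsilon (inhabits k0) (fun k => gK k = al)).
    assert (Hh : forall k, h (gK k) = k).
    { intro k. apply Hg. unfold h.
      apply (epsilon_spec (inhabits k0) (fun k' => gK k' = gK k)). exists k; reflexivity. }
    set (phi' := fun al => phi (h al)).
    set (a := fun (u : Mu -> Prop) (s : I) => exists c : E -> Ms s,
        forall al, u al -> dsat (Ms s) (phi' al) c (fun y => rep (pars (h al) y) s)).
    assert (Hprob : moral_problem Th Mu E Delta T D a).
    { split; [|split; [|split]].
      - intros u Hu.
        destruct (Hfin _ (image_small Th _ _ h u Hu)) as [c Hc].
        assert (HH : forall p : {al | u al}, D (fun s => dsat (Ms s) (phi' (proj1_sig p))
                    (fun e => rep (c e) s) (fun y => rep (pars (h (proj1_sig p)) y) s))).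
        { intros [al Hal]. simpl.
          destruct (HDelta _ (HD (h al))) as [HL HA].
          apply (los_d D Ms HF HC (phi (h al)) c (pars (h al))); auto.
          - intro e. apply ftrue; auto.
          - intro y. apply ftrue; auto.
          - apply Hc. exists al; auto. }
        apply (fmono D HF _ _ (HC _ Hu _ HH)). intros s Hs.
        exists (fun e => rep (c e) s). intros al Hal. apply (Hs (exist _ al Hal)).
      - intros u v _ _ Huv s [c Hc]. exists c. auto.
      - intro s. destruct (HMs s) as [[m] _]. exists (fun _ => m). intros _ [].
      - exists phi'. split.
        + intro al. apply HD.
        + intros A [s Hs] u Hu. exists (Ms s), (fun al y => rep (pars (h al) y) s).
          split. apply HMs. intros v Hv. split.
          * intro H. apply (H s Hs).
          * intros H [c Hc]. apply (H s Hs). exists c. exact Hc. }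
    destruct (Hmor a Hprob) as [b [Hb1 [Hb2 [Hb3 Hb4]]]].
    assert (Hc : forall s, exists c : E -> Ms s, forall al, w s al -> b (fun x => x = al) s ->
        dsat (Ms s) (phi' al) c (fun y => rep (pars (h al) y) s)).
    { intro s.
      assert (Hus : small Th (fun al => w s al /\ b (fun x => x = al) s)).
      { apply (small_sub _ _ _ (w s)); [tauto| apply Hw]. }
      destruct (Hb3 _ Hus s (proj2 (Hb4 _ Hus s) (fun al H => proj2 H))) as [c Hc'].
      exists c. intros al H1 H2. apply Hc'. split; auto. }
    set (cs := fun s => proj1_sig (constructive_indefinite_description _ (Hc s))).
    assert (Hcs : forall s al, w s al -> b (fun x => x = al) s ->
        dsat (Ms s) (phi' al) (cs s) (fun y => rep (pars (h al) y) s)).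
    { intro s. exact (proj2_sig (constructive_indefinite_description _ (Hc s))). }
    exists (fun e => rp_class D (fun s => carrier (Ms s)) (fun s => cs s e)).
    intro k.
    assert (H : dsat (redprod D Ms) (phi (h (gK k)))
         (fun e => rp_class D (fun s => carrier (Ms s)) (fun s => cs s e)) (pars (h (gK k)))).
    { destruct (HDelta _ (HD (h (gK k)))) as [HL HA].
      apply (los_d D Ms HF HC _ _ _ cs (fun s y => rep (pars (h (gK k)) y) s)); auto.
      - intro e. exact (rep_class D (fun s => carrier (Ms s)) (fun s => cs s e) HF).
      - intro y. apply ftrue; auto.
      - apply (fmono D HF _ _ (fand2 D HF _ _ (HwD (gK k)) (Hb1 _ (small_single _ _ (gK k) Hnat)))).
        intros s [H1 H2]. apply (Hcs s (gK k) H1 H2). }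
    rewrite Hh in H. exact H.
  - intros Hsat a [Ha1 [Ha2 [Ha3 [phi [HphiD Hprob]]]]].
    pose (X := fun s => constructive_indefinite_description _
                 (Hprob (fun s' => s' = s) (ex_intro _ s eq_refl) (w s) (Hw s))).
    pose (Ms := fun s => proj1_sig (X s)).
    pose (Y := fun s => constructive_indefinite_description _ (proj2_sig (X s))).
    pose (bs := fun s => proj1_sig (Y s)).
    assert (HY : forall s, model T (Ms s) /\
      forall v : Mu -> Prop, (forall x, v x -> w s x) ->
        ((forall s', s' = s -> a v s') ->
           exists c : E -> Ms s, forall al, v al -> dsat (Ms s) (phi al) c (bs s al)) /\
        ((forall s', s' = s -> ~ a v s') ->
           ~ exists c : E -> Ms s, forall al, v al -> dsat (Ms s) (phi al) c (bs s al))).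
    { intro s. exact (proj2_sig (Y s)). }
    set (pars := fun al y => rp_class D (fun s => carrier (Ms s)) (fun s => bs s al y)).
    destruct (Hsat Ms (fun s => proj1 (HY s)) Mu phi pars (ex_intro _ (fun x => x) (fun x y H => H))
                HphiD) as [c Hc].
    { intros J HJ.
      assert (HX : D (fun s => (forall al, J al -> w s al) /\ a J s)).
      { apply fand2; auto.
        apply (fmono D HF _ _ (HC _ HJ (fun p s => w s (proj1_sig p)) (fun p => HwD _))).
        intros s H al Hal. apply (H (exist _ al Hal)). }
      assert (Hcc : forall s, exists cc : E -> Ms s, ((forall al, J al -> w s al) /\ a J s) ->
                 forall al, J al -> dsat (Ms s) (phi al) cc (bs s al)).
      { intro s. destruct (classic ((forall al, J al -> w s al) /\ a J s)) as [[H1 H2]|Hn].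
        - destruct (proj1 (proj2 (HY s) J H1)) as [cc Hcc].
          + intros s' ->. exact H2.
          + exists cc. intros _. exact Hcc.
        - destruct (proj1 (HY s)) as [[m] _]. exists (fun _ => m). intro; contradiction. }
      set (cs := fun s => proj1_sig (constructive_indefinite_description _ (Hcc s))).
      exists (fun e => rp_class D (fun s => carrier (Ms s)) (fun s => cs s e)).
      intros al Hal. destruct (HDelta _ (HphiD al)) as [HL HA].
      apply (los_d D Ms HF HC _ _ _ cs (fun s => bs s al)); auto.
      - intro e. exact (rep_class D (fun s => carrier (Ms s)) (fun s => cs s e) HF).
      - intro y. exact (rep_class D (fun s => carrier (Ms s)) (fun s => bs s al y) HF).
      - apply (fmono D HF _ _ HX). intros s Hs.
        exact (proj2_sig (constructive_indefinite_description _ (Hcc s)) Hs al Hal). }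
    exists (fun u s => forall al, u al -> w s al /\ dsat (Ms s) (phi al) (fun e => rep (c e) s) (bs s al)).
    split; [|split; [|split]].
    + intros u Hu.
      assert (HH : forall p : {al | u al}, D (fun s => w s (proj1_sig p) /\
          dsat (Ms s) (phi (proj1_sig p)) (fun e => rep (c e) s) (bs s (proj1_sig p)))).
      { intros [al Hal]. simpl. apply fand2; auto.
        destruct (HDelta _ (HphiD al)) as [HL HA].
        apply (los_d D Ms HF HC _ (c) (pars al)); auto.
        - intro e. apply ftrue; auto.
        - intro y. exact (rep_class D (fun s => carrier (Ms s)) (fun s => bs s al y) HF). }
      apply (fmono D HF _ _ (HC _ Hu _ HH)). intros s Hs al Hal. apply (Hs (exist _ al Hal)).
    + intros s al [].
    + intros u Hu s Hb. destruct (classic (a u s)) as [H|H]; auto. exfalso.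
      assert (Hsub : forall x, u x -> w s x) by (intros x Hx; apply (Hb x Hx)).
      destruct (proj2 (HY s) u Hsub) as [_ Hneg]. apply Hneg.
      * intros s' ->. exact H.
      * exists (fun e => rep (c e) s). intros al Hal. apply (Hb al Hal).
    + intros u Hu s. split.
      * intros H al Hal x ->. auto.
      * intros H al Hal. apply (H al Hal al eq_refl).
Qed.
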